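(* For every $\lambda\in P^+$ and every $\mathbf i\in\mathbb N^r\times\mathbb N^r$, $$W(\lambda)^{\ge\mathbf i}=U(\mathfrak n^-[t])^{\ge\mathbf i}\,w_\lambda,\qquad W(\lambda)^{>\mathbf i}=U(\mathfrak n^-[t])^{>\mathbf i}\,w_\lambda.$$
   Context: $\mathfrak g=\mathfrak{sl}_{r+1}(\mathbb C)$, $r\ge2$, $x^+_{i,j}=E_{i,j+1}$, $x^-_{i,j}=E_{j+1,i}$, $\mathfrak n^\pm=\bigoplus\mathbb Cx^\pm_{i,j}$; $\mathfrak g_{r-1}\cong\mathfrak{sl}_r$ the subalgebra generated by $x^\pm_{i,j}$, $1\le i\le j\le r-1$, $\mathfrak n^-_{r-1}=\bigoplus_{1\le i\le j\le r-1}\mathbb Cx^-_{i,j}$; $\mathfrak a[t]=\mathfrak a\otimes\mathbb C[t]$. Weyl module $W(\lambda)$: generated by $w_\lambda$ with $\mathfrak n^+[t]w_\lambda=0$, $(\mathfrak h\otimes t\mathbb C[t])w_\lambda=0$, $hw_\lambda=\lambda(h)w_\lambda$, $(x^-_{i,i})^{m_i+1}w_\lambda=0$. $\mathbf F$: pairs $(\ell,\mathbf s)$, $\mathbf s=(\mathbf s(1)\le\dots\le\mathbf s(\ell))\in\mathbb N^\ell$, $|\mathbf s|=\sum\mathbf s(p)$; $\underline{\mathbf x}^-_r(\underline\ell,\underline{\mathbf s})=\prod_{i=1}^r\prod_p(x^-_{i,r}\otimes t^{\mathbf s_i(p)})$ (product over $i$ in increasing order), $|\underline{\mathbf s}|=(|\mathbf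 s_1|,..,|\mathbf s_r|)$. Order on $\mathbb N^r\times\mathbb N^r$: $(\underline\ell,\underline d)>(\underline\ell',\underline d')$ iff the first $s$ with $\ell_s\neq\ell'_s$ has $\ell_s<\ell'_s$, or $\underline\ell=\underline\ell'$ and the last $s$ with $d_s\ne d'_s$ has $d_s>d'_s$. Definitions: $W(\lambda)^{\ge\mathbf i}=\sum_{(\underline\ell,|\underline{\mathbf s}|)\ge\mathbf i}U(\mathfrak g_{r-1}[t])\underline{\mathbf x}^-_r(\underline\ell,\underline{\mathbf s})w_\lambda$, $U(\mathfrak n^-[t])^{\ge\mathbf i}=\sum_{(\underline\ell,|\underline{\mathbf s}|)\ge\mathbf i}U(\mathfrak n^-_{r-1}[t])\underline{\mathbf x}^-_r(\underline\ell,\underline{\mathbf s})$ (sums over $(\underline\ell,\underline{\mathbf s})\in\mathbf F^r$), and similarly with $>$ in place of $\ge$. *)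

(* Defs.v *)
From HB Require Import structures.
From mathcomp Require Import all_boot all_order all_algebra.
From mathcomp Require Import Rstruct complex.
Set Implicit Arguments. Unset Strict Implicit. Unset Printing Implicit Defensive.
Import Order.TTheory GRing.Theory Num.Theory.
Local Open Scope ring_scope.

Definition C : numClosedFieldType := Rdefinitions.R[i].

Section Weyl.
Variable r : nat.
(* gl_{r+1}(C): (r+1)x(r+1) matrices, 0-indexed by 'I_(r.+1).
   sl_{r+1} = trace-zero matrices.
   Paper (1-indexed) E_{a,b} is delta_mx (a-1) (b-1) here. *)
Notation Mat := 'M[C]_(r.+1).

Definition in_sl (A : Mat) : Prop := \tr A = 0.

(* g_{r-1} ~ sl_r : trace zero matrices supported on the first r rows/columns *)
Definition in_g_rm1 (A : Mat) : Prop :=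
  \tr A = 0 /\ forall a b : 'I_(r.+1), (a == ord_max) || (b == ord_max) -> A a b = 0.

(* spanning set of n^-_{r-1}: x^-_{i,j} = E_{j+1,i}, 1 <= i <= j <= r-1;
   0-indexed: delta_mx a b with b < a < r. *)
Definition in_nminus_rm1_basis (A : Mat) : Prop :=
  exists a b : 'I_(r.+1), (b < a)%N /\ (a < r)%N /\ A = delta_mx a b.

Definition in_cartan (h : Mat) : Prop := is_diag_mx h /\ \tr h = 0.

(* A representation of the current algebra g[t] = sl_{r+1} (x) C[t] on V:
   act A k is the action of A (x) t^k  (A in sl_{r+1}, k in N). *)
Definition current_module (V : lmodType C) (act : Mat -> nat -> V -> V) : Prop :=
  [/\ (forall A k (a : C) (u v : V), act A k (a *: u + v) = a *: act A k u + act A k v),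
      (forall A B k (a : C) (v : V), in_sl A -> in_sl B ->
          act (a *: A + B) k v = a *: act A k v + act B k v) &
      (forall A B k l (v : V), in_sl A -> in_sl B ->
          act (A *m B - B *m A) (k + l) v = act A k (act B l v) - act B l (act A k v))].

(* the dominant weight lambda = sum_i m_i omega_i, lambda(h_i) = m_i
   (h_i = E_ii - E_{i+1,i+1}); for h in h:
   lambda(h) = sum_{i<r} m_i (h_00 + ... + h_ii) (0-indexed). *)
Definition weight (m : 'I_r -> nat) (h : Mat) : C :=
  \sum_(i < r) (m i)%:R * \sum_(j < r.+1 | (j <= i)%N) h j j.

Definition weyl_rels (m : 'I_r -> nat) (V : lmodType C)
    (act : Mat -> nat -> V -> V) (w : V) : Prop :=
  [/\ (* n^+[t] w = 0 ; n^+ spanned by E_{a,b}, a < b *)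
      (forall (a b : 'I_(r.+1)) k, (a < b)%N -> act (delta_mx a b) k w = 0),
      (forall h k, in_cartan h -> (0 < k)%N -> act h k w = 0),
      (forall h, in_cartan h -> act h 0 w = weight m h *: w) &
      (* (x^-_{i,i})^{m_i+1} w = 0, x^-_{i,i} = E_{i+1,i} *)
      (forall i : 'I_r,
          iter (m i).+1 (act (delta_mx (inord i.+1) (inord i)) 0) w = 0)].

(* the subspace U(a[t]) . S, where a is spanned by the matrices satisfying P:
   the smallest subspace containing S and stable under all act A k, P A. *)
Inductive gen_span (V : lmodType C) (act : Mat -> nat -> V -> V)
    (P : Mat -> Prop) (S : V -> Prop) : V -> Prop :=
| gen_base v : S v -> gen_span act P S v
| gen_zero : gen_span act P S 0
| gen_add u v : gen_span act P S u -> gen_span act P S v -> gen_span act P S (u + v)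
| gen_scale (a : C) v : gen_span act P S v -> gen_span act P S (a *: v)
| gen_act A k v : P A -> gen_span act P S v -> gen_span act P S (act A k v).

(* (V, act, w) is (isomorphic to) the Weyl module W(lambda): it satisfies the
   relations, is generated by w, and is universal among such modules. *)
Definition is_weyl_module (m : 'I_r -> nat) (V : lmodType C)
    (act : Mat -> nat -> V -> V) (w : V) : Prop :=
  [/\ current_module act, weyl_rels m act w,
      (forall v, gen_span act in_sl (fun u => u = w) v) &
      (forall (V' : lmodType C) (act' : Mat -> nat -> V' -> V') (w' : V'),
          current_module act' -> weyl_rels m act' w' ->
          exists f : V -> V',
            [/\ (forall (a : C) u v, f (a *: u + v) = a *: f u + f v),
                f w = w' &
                (forall A k v, in_sl A -> f (act A k v) = act' A k (f v))])].

(* x^-_{i,r} = E_{r+1,i}; 0-indexed (i : 'I_r stands for paper index i+1):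
   delta_mx ord_max i. *)
Definition xm_r (i : 'I_r) : Mat := delta_mx ord_max (inord i).

(* element of F^r: for each i a nondecreasing sequence s_i (length l_i = size) *)
Definition in_F (ss : 'I_r -> seq nat) : Prop := forall i, sorted leq (ss i).

(* x^-_r(l, s) applied to v = prod_{i=1}^r prod_p (x^-_{i,r} (x) t^{s_i(p)}) v,
   product over i in increasing order (leftmost factor is i = 1). *)
Definition xprod (V : lmodType C) (act : Mat -> nat -> V -> V)
    (ss : 'I_r -> seq nat) (v : V) : V :=
  foldr (fun i u => foldr (fun k u' => act (xm_r i) k u') u (ss i)) v (enum 'I_r).

Definition idx := (('I_r -> nat) * ('I_r -> nat))%type.

Definition idx_gt (x y : idx) : Prop :=
  (exists s : 'I_r, (forall t : 'I_r, (t < s)%N -> x.1 t = y.1 t) /\ (x.1 s < y.1 s)%N)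
  \/ ((forall t, x.1 t = y.1 t) /\
      exists s : 'I_r, (forall t : 'I_r, (s < t)%N -> x.2 t = y.2 t) /\ (y.2 s < x.2 s)%N).

Definition idx_ge (x y : idx) : Prop :=
  idx_gt x y \/ ((forall t, x.1 t = y.1 t) /\ (forall t, x.2 t = y.2 t)).

Definition idx_of (ss : 'I_r -> seq nat) : idx :=
  (fun i => size (ss i), fun i => sumn (ss i)).

Definition gens_ge (V : lmodType C) (act : Mat -> nat -> V -> V) (w : V)
    (ii : idx) (v : V) : Prop :=
  exists ss, in_F ss /\ idx_ge (idx_of ss) ii /\ v = xprod act ss w.
Definition gens_gt (V : lmodType C) (act : Mat -> nat -> V -> V) (w : V)
    (ii : idx) (v : V) : Prop :=
  exists ss, in_F ss /\ idx_gt (idx_of ss) ii /\ v = xprod act ss w.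

(* W(lambda)^{>= i} = sum U(g_{r-1}[t]) x^-_r(l,s) w *)
Definition W_ge V act w ii := gen_span act in_g_rm1 (@gens_ge V act w ii).
Definition W_gt V act w ii := gen_span act in_g_rm1 (@gens_gt V act w ii).
(* U(n^-[t])^{>= i} w = sum U(n^-_{r-1}[t]) x^-_r(l,s) w *)
Definition Un_ge_w V act w ii := gen_span act in_nminus_rm1_basis (@gens_ge V act w ii).
Definition Un_gt_w V act w ii := gen_span act in_nminus_rm1_basis (@gens_gt V act w ii).
End Weyl.

(* Main.v *)
Require Import Defs.
From HB Require Import structures.
From mathcomp Require Import all_boot all_order all_algebra.
From mathcomp Require Import Rstruct complex.
Set Implicit Arguments. Unset Strict Implicit. Unset Printing Implicit Defensive.
Import Order.TTheory GRing.Theory Num.Theory.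
Local Open Scope ring_scope.

Lemma idx_gt_trans r (x y z : idx r) : idx_gt x y -> idx_gt y z -> idx_gt x z.
Proof.
case=> [[s1 [e1 l1]]|[E1 [s1 [e1 l1]]]]; case=> [[s2 [e2 l2]]|[E2 [s2 [e2 l2]]]].
- left; case: (ltngtP s1 s2) => [h|h|h].
  + exists s1; split; last by rewrite -(e2 s1 h).
    by move=> t ht; rewrite e1 // e2 // (ltn_trans ht h).
  + exists s2; split; last by rewrite e1.
    by move=> t ht; rewrite e1 ?e2 // (ltn_trans ht h).
  + have h' : s2 = s1 by apply: val_inj.
    subst s2; exists s1; split; first by move=> t ht; rewrite e1 // e2.
    exact: (ltn_trans l1).
- left; exists s1; split; first by move=> t ht; rewrite e1 // E2.
  by rewrite -E2.
- left; exists s2; split; first by move=> t ht; rewrite E1 e2.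
  by rewrite E1.
- right; split; first by move=> t; rewrite E1 E2.
  case: (ltngtP s1 s2) => [h|h|h].
  + exists s2; split; last by rewrite (e1 s2 h).
    by move=> t ht; rewrite e1 ?e2 // (ltn_trans h ht).
  + exists s1; split; last by rewrite -(e2 s1 h).
    by move=> t ht; rewrite e1 // e2 // (ltn_trans h ht).
  + have h' : s2 = s1 by apply: val_inj.
    subst s2; exists s1; split; first by move=> t ht; rewrite e1 // e2.
    exact: (ltn_trans l2).
Qed.

Lemma idx_ge_gt r (x y z : idx r) : idx_ge x y -> idx_gt y z -> idx_gt x z.
Proof.
case=> [h1|[E1 E2]] h2; first exact: idx_gt_trans h1 h2.
case: h2 => [[s [e l]]|[E [s [e l]]]].
- by left; exists s; rewrite E1; split=> // t ht; rewrite E1 e.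
- right; split; first by move=> t; rewrite E1 E.
  by exists s; rewrite E2; split=> // t ht; rewrite E2 e.
Qed.

Lemma idx_ge_trans r (x y z : idx r) : idx_ge x y -> idx_ge y z -> idx_ge x z.
Proof.
move=> h1 [h2|[E1 E2]]; first by left; apply: idx_ge_gt h1 h2.
case: h1 => [[[s [e l]]|[E [s [e l]]]]|[F1 F2]].
- by left; left; exists s; rewrite -E1; split=> // t ht; rewrite -E1 e.
- left; right; split; first by move=> t; rewrite E -E1.
  by exists s; rewrite -E2; split=> // t ht; rewrite -E2 e.
- by right; split=> t; rewrite ?F1 ?F2.
Qed.

Section Main.
Variables (r : nat) (V : lmodType C) (act : 'M[C]_(r.+1) -> nat -> V -> V) (w : V).
Hypothesis Hcm : current_module act.

Lemma x_eq_xx (x : V) : x = x + x -> x = 0.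
Proof. by move=> h; apply: (@addrI _ x); rewrite addr0 -h. Qed.

Lemma act0 A k : act A k 0 = 0.
Proof.
case: Hcm => h _ _; apply: x_eq_xx.
by have := h A k 1 0 0; rewrite !scale1r addr0.
Qed.

Lemma actD A k u v : act A k (u + v) = act A k u + act A k v.
Proof. by case: Hcm => h _ _; rewrite -{1}(scale1r u) h scale1r. Qed.

Lemma actZ A k a u : act A k (a *: u) = a *: act A k u.
Proof. by case: Hcm => h _ _; rewrite -(addr0 (a *: u)) h act0 addr0. Qed.

Lemma actN A k u : act A k (- u) = - act A k u.
Proof. by rewrite -scaleN1r actZ scaleN1r. Qed.

Lemma actB A k u v : act A k (u - v) = act A k u - act A k v.
Proof. by rewrite actD actN. Qed.

Lemma in_sl0 : in_sl (0 : 'M[C]_(r.+1)).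
Proof. by rewrite /in_sl mxtrace0. Qed.

Lemma in_slD (A B : 'M[C]_(r.+1)) : in_sl A -> in_sl B -> in_sl (A + B).
Proof. by rewrite /in_sl mxtraceD => -> ->; rewrite addr0. Qed.

Lemma in_slZ a (A : 'M[C]_(r.+1)) : in_sl A -> in_sl (a *: A).
Proof. by rewrite /in_sl mxtraceZ => ->; rewrite mulr0. Qed.

Lemma in_sl_comm (A B : 'M[C]_(r.+1)) : in_sl (A *m B - B *m A).
Proof. by rewrite /in_sl linearB /= mxtrace_mulC subrr. Qed.

Lemma in_sl_delta (a b : 'I_(r.+1)) : a != b -> in_sl (delta_mx a b).
Proof.
move=> ab; rewrite /in_sl /mxtrace; apply: big1 => k _; rewrite mxE.
by case: (eqVneq a k) => [<-|//]; rewrite (negbTE ab) andbF.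
Qed.

Lemma actA0 k v : act 0 k v = 0.
Proof.
case: Hcm => _ h _; apply: x_eq_xx.
by have := h 0 0 k 1 v in_sl0 in_sl0; rewrite !scale1r addr0.
Qed.

Lemma actAD A B k v : in_sl A -> in_sl B -> act (A + B) k v = act A k v + act B k v.
Proof. by case: Hcm => _ h _ sA sB; rewrite -{1}(scale1r A) h // scale1r. Qed.

Lemma actAZ a A k v : in_sl A -> act (a *: A) k v = a *: act A k v.
Proof. by case: Hcm => _ h _ sA; have := h A 0 k a v sA in_sl0; rewrite !addr0 actA0 addr0. Qed.

Lemma actAsum (I : Type) (s : seq I) (F : I -> 'M[C]_(r.+1)) k v :
  (forall i, in_sl (F i)) -> act (\sum_(i <- s) F i) k v = \sum_(i <- s) act (F i) k v.
Proof.
move=> hF; elim: s => [|i s IH]; first by rewrite !big_nil actA0.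
rewrite !big_cons actAD ?IH //.
elim: s {IH} => [|j s IH]; first by rewrite big_nil; exact: in_sl0.
by rewrite big_cons; apply: in_slD.
Qed.

Lemma act_comm A B k l v : in_sl A -> in_sl B ->
  act A k (act B l v) = act B l (act A k v) + act (A *m B - B *m A) (k + l) v.
Proof. by case: Hcm => _ _ h sA sB; rewrite h // addrC subrK. Qed.


Lemma xm_neq (i : 'I_r) : (inord i : 'I_(r.+1)) != ord_max.
Proof.
apply/negP => /eqP /(congr1 val) /=; rewrite inordK; last exact: ltnW (ltn_ord i).
by move=> h; move: (ltn_ord i); rewrite h ltnn.
Qed.

Lemma in_sl_xm (i : 'I_r) : in_sl (xm_r i).
Proof. by apply: in_sl_delta; rewrite eq_sym xm_neq. Qed.

Lemma xm_mul (i j : 'I_r) : xm_r i *m xm_r j = 0.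
Proof. by rewrite /xm_r mul_delta_mx_cond (negbTE (xm_neq i)) mulr0n. Qed.

Lemma act_xcomm i j k l v :
  act (xm_r i) k (act (xm_r j) l v) = act (xm_r j) l (act (xm_r i) k v).
Proof. by rewrite act_comm ?xm_mul ?subrr ?actA0 ?addr0 //; apply: in_sl_xm. Qed.

Definition G (l : seq ('I_r * nat)) (v : V) :=
  foldr (fun p u => act (xm_r p.1) p.2 u) v l.

Lemma G_cat l1 l2 v : G (l1 ++ l2) v = G l1 (G l2 v).
Proof. exact: foldr_cat. Qed.

Lemma G0 l : G l 0 = 0.
Proof. by elim: l => //= p l ->; rewrite act0. Qed.

Lemma GD l u v : G l (u + v) = G l u + G l v.
Proof. by elim: l => //= p l ->; rewrite actD. Qed.

Lemma GZ l a v : G l (a *: v) = a *: G l v.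
Proof. by elim: l => //= p l ->; rewrite actZ. Qed.

Lemma G_xcomm l i k v : act (xm_r i) k (G l v) = G l (act (xm_r i) k v).
Proof. by elim: l => //= p l <-; rewrite act_xcomm. Qed.

Lemma G_perm l1 l2 v : perm_eq l1 l2 -> G l1 v = G l2 v.
Proof.
elim: l1 l2 => [|p l1 IH] l2 H.
  by move: H; rewrite perm_sym => /perm_nilP ->.
have pin : p \in l2 by rewrite -(perm_mem H) mem_head.
move: H; case/splitPr: pin => l2a l2b H.
have H' : perm_eq l1 (l2a ++ l2b).
  by rewrite -(perm_cons p); apply: (perm_trans H); rewrite -cat1s perm_catCA.
by rewrite G_cat /= -G_xcomm -G_cat -(IH _ H').
Qed.

Definition cnt (l : seq ('I_r * nat)) (t : 'I_r) := count (fun p => p.1 == t) l.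
Definition sm (l : seq ('I_r * nat)) (t : 'I_r) := sumn [seq p.2 | p <- l & p.1 == t].
Definition idxL l : idx r := (cnt l, sm l).

Lemma cnt_split l1 p l2 t : cnt (l1 ++ p :: l2) t = (cnt l1 t + (p.1 == t) + cnt l2 t)%N.
Proof. by rewrite /cnt count_cat /= addnA. Qed.

Lemma sm_split l1 p l2 t :
  sm (l1 ++ p :: l2) t = (sm l1 t + (if p.1 == t then p.2 else 0) + sm l2 t)%N.
Proof. by rewrite /sm filter_cat map_cat sumn_cat /=; case: ifP => _ /=; rewrite ?addnA ?addn0. Qed.

Lemma idx_replace l1 l2 (i j : 'I_r) s s' : (i <= j)%N -> (s <= s')%N ->
  idx_ge (idxL (l1 ++ (j, s') :: l2)) (idxL (l1 ++ (i, s) :: l2)).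
Proof.
move=> ij ss; case: (eqVneq i j) => [<-|nij].
  have Ec t : cnt (l1 ++ (i, s') :: l2) t = cnt (l1 ++ (i, s) :: l2) t.
    by rewrite !cnt_split.
  case: (eqVneq s s') => [<-|nss].
    by right; split=> t.
  left; right; split; first exact: Ec.
  exists i; split.
    move=> t it; rewrite /idxL /= !sm_split /=.
    by have /negbTE -> : i != t by apply/eqP => h; move: it; rewrite h ltnn.
  rewrite /idxL /= !sm_split /= eqxx ltn_add2r ltn_add2l ltn_neqAle nss ss.
  done.
have ilt : (i < j)%N by rewrite ltn_neqAle ij andbT; apply/eqP => /val_inj; apply/eqP.
left; left; exists i; split.
  move=> t it; rewrite /idxL /= !cnt_split /=.
  have /negbTE -> : i != t by apply/eqP => h; move: it; rewrite h ltnn.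
  have /negbTE -> // : j != t.
  by apply/eqP => h; move: it; rewrite -h => /(ltn_trans ilt); rewrite ltnn.
rewrite /idxL /= !cnt_split /= eqxx eq_sym (negbTE nij) addn0 addn1 ltn_add2r.
by rewrite ltnSn.
Qed.


Definition flat (ss : 'I_r -> seq nat) : seq ('I_r * nat) :=
  flatten [seq [seq (i, k) | k <- ss i] | i <- enum 'I_r].

Lemma xprod_G ss v : xprod act ss v = G (flat ss) v.
Proof.
rewrite /xprod /flat; elim: (enum 'I_r) => [|i e IH] //=.
by rewrite G_cat -IH /G foldr_map.
Qed.

Lemma filter_flat_gen (ss : 'I_r -> seq nat) (e : seq 'I_r) t : uniq e ->
  [seq p <- flatten [seq [seq (i, k) | k <- ss i] | i <- e] | p.1 == t] =
  if t \in e then [seq (t, k) | k <- ss t] else [::].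
Proof.
elim: e => [|i e IH] //= /andP [ie ue].
rewrite filter_cat IH // in_cons.
case: (eqVneq t i) => [->|ti] /=.
  rewrite (negbTE ie) cats0; elim: (ss i) => //= k s ->; by rewrite eqxx.
have -> : [seq p <- [seq (i, k) | k <- ss i] | p.1 == t] = [::].
  by elim: (ss i) => //= k s ->; rewrite eq_sym (negbTE ti).
done.
Qed.

Lemma filter_flat ss t : [seq p <- flat ss | p.1 == t] = [seq (t, k) | k <- ss t].
Proof. by rewrite /flat filter_flat_gen ?enum_uniq // mem_enum. Qed.

Lemma cnt_flat ss t : cnt (flat ss) t = size (ss t).
Proof. by rewrite /cnt -size_filter filter_flat size_map. Qed.

Lemma sm_flat ss t : sm (flat ss) t = sumn (ss t).
Proof. by rewrite /sm filter_flat -map_comp map_id_in. Qed.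

Definition sort_ss (l : seq ('I_r * nat)) (t : 'I_r) :=
  sort leq [seq p.2 | p <- l & p.1 == t].

Lemma count_fst (s : seq ('I_r * nat)) t k : all (fun p => p.1 == t) s ->
  count_mem (t, k) s = count_mem k [seq p.2 | p <- s].
Proof.
elim: s => //= [[i j] s IH] /andP [/= /eqP -> hs]; rewrite IH //.
by congr (_ + _)%N; rewrite xpair_eqE eqxx /= eq_sym.
Qed.

Lemma count_mem_filter (s : seq ('I_r * nat)) t k :
  count_mem (t, k) s = count_mem (t, k) [seq p <- s | p.1 == t].
Proof.
rewrite count_filter; apply: eq_count => -[i j] /=.
by case: (eqVneq (i, j) (t, k)) => [[-> _]|]; rewrite ?eqxx ?andbF.
Qed.

Lemma perm_flat l : perm_eq l (flat (sort_ss l)).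
Proof.
apply/allP => -[t k] _; apply/eqP.
rewrite count_mem_filter [in RHS]count_mem_filter filter_flat.
rewrite count_fst ?filter_all // count_fst; last by apply/allP => p /mapP [? _ ->].
rewrite -map_comp map_id_in //.
have hp : perm_eq (sort_ss l t) [seq p.2 | p <- l & p.1 == t] by rewrite /sort_ss perm_sort.
by rewrite (permP hp).
Qed.

Lemma idx_eq_ge (x y : idx r) : (forall t, x.1 t = y.1 t) -> (forall t, x.2 t = y.2 t) ->
  idx_ge x y.
Proof. by move=> h1 h2; right. Qed.

Lemma gens_of_list (R : idx r -> Prop) (Rmono : forall x y, idx_ge y x -> R x -> R y)
    l : R (idxL l) -> exists ss, [/\ in_F ss, R (idx_of ss) & G l w = xprod act ss w].
Proof.
move=> Rl; exists (sort_ss l); split.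
- by move=> i; apply: sort_sorted; exact: leq_total.
- apply: Rmono Rl; apply: idx_eq_ge => t /=.
  + by rewrite /sort_ss size_sort size_map size_filter.
  + have hp : perm_eq (sort_ss l t) [seq p.2 | p <- l & p.1 == t] by rewrite /sort_ss perm_sort.
    by rewrite (perm_sumn hp).
- by rewrite xprod_G; apply: G_perm; apply: perm_flat.
Qed.

Definition gensR (R : idx r -> Prop) (v : V) :=
  exists ss, in_F ss /\ R (idx_of ss) /\ v = xprod act ss w.
Definition Un R := gen_span act (@in_nminus_rm1_basis r) (gensR R).

Variable R : idx r -> Prop.
Hypothesis Rmono : forall x y, idx_ge y x -> R x -> R y.

Lemma Un_list l : R (idxL l) -> Un R (G l w).
Proof.
move=> Rl; have [ss [Fs Rs E]] := gens_of_list Rmono Rl.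
by apply: gen_base; exists ss; rewrite E.
Qed.

Lemma base_generic (y : 'M[C]_(r.+1)) (sy : in_sl y)
  (Hy1 : forall i : 'I_r, exists c (j : 'I_r),
       (i <= j)%N /\ y *m xm_r i - xm_r i *m y = c *: xm_r j)
  (Hy2 : forall k, exists c, act y k w = c *: w) k :
  forall l pre, R (idxL (pre ++ l)) -> Un R (G pre (act y k (G l w))).
Proof.
elim=> [|[i s] l IH] pre Rl.
  have [c ->] := Hy2 k; rewrite GZ; apply: gen_scale; apply: Un_list.
  by rewrite cats0 in Rl.
rewrite /= act_comm //; last exact: in_sl_xm.
rewrite GD; apply: gen_add.
  have -> : G pre (act (xm_r i) s (act y k (G l w))) = G (pre ++ [:: (i, s)]) (act y k (G l w)).
    by rewrite G_cat.
  by apply: IH; rewrite -catA.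
have [c [j [ij ->]]] := Hy1 i.
rewrite actAZ; last exact: in_sl_xm.
rewrite GZ; apply: gen_scale.
have -> : G pre (act (xm_r j) (k + s) (G l w)) = G (pre ++ (j, (k + s)%N) :: l) w.
  by rewrite G_cat.
apply: Un_list; apply: Rmono Rl; apply: idx_replace => //.
exact: leq_addl.
Qed.


Lemma Un_sum (I : Type) (s : seq I) (P : pred I) (F : I -> V) :
  (forall i, P i -> Un R (F i)) -> Un R (\sum_(i <- s | P i) F i).
Proof. move=> h; apply: big_ind => //; [exact: gen_zero | exact: gen_add]. Qed.

Lemma in_g_sl (A : 'M[C]_(r.+1)) : in_g_rm1 A -> in_sl A.
Proof. by case. Qed.

Lemma in_g_comm (A B : 'M[C]_(r.+1)) : in_g_rm1 A -> in_g_rm1 B ->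
  in_g_rm1 (A *m B - B *m A).
Proof.
move=> [_ hA] [_ hB]; split; first exact: in_sl_comm.
move=> a b /orP [] h; rewrite !mxE.
- rewrite !big1 ?subrr // => j _; first by rewrite hB ?h ?mul0r.
  by rewrite hA ?h ?mul0r.
- rewrite !big1 ?subrr // => j _; first by rewrite hA ?h ?orbT ?mulr0.
  by rewrite hB ?h ?orbT ?mulr0.
Qed.

Lemma lt_of_neq_max (a : 'I_(r.+1)) : a != ord_max -> (a < r)%N.
Proof.
move=> h; rewrite ltn_neqAle -ltnS ltn_ord andbT; apply: contra h => /eqP e.
by apply/eqP/val_inj.
Qed.

Lemma in_g_nminus (X : 'M[C]_(r.+1)) : in_nminus_rm1_basis X -> in_g_rm1 X.
Proof.
move=> [a [b [ba [ar ->]]]]; split.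
  by apply: in_sl_delta; apply/eqP => e; move: ba; rewrite e ltnn.
move=> x y /orP [] /eqP -> ; rewrite mxE.
- have /negbTE -> // : ord_max != a.
  by apply/eqP => e; move: ar; rewrite -e /= ltnn.
- have /negbTE -> : ord_max != b; last by rewrite andbF.
  apply/eqP => e; move: (ltn_trans ba ar); rewrite -e /= ltnn //.
Qed.

Variable m : 'I_r -> nat.
Hypothesis Hrel : weyl_rels m act w.

Lemma delta_Hy1 (a b : 'I_(r.+1)) (ab : (a < b)%N) (hb : (b < r)%N) (i : 'I_r) :
  exists c (j : 'I_r), (i <= j)%N /\
    delta_mx a b *m xm_r i - xm_r i *m delta_mx a b = c *: xm_r j.
Proof.
rewrite /xm_r !mul_delta_mx_cond.
have /negbTE -> : b != ord_max.
  by apply/eqP => e; move: hb; rewrite e /= ltnn.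
case: (eqVneq (inord i : 'I_(r.+1)) a) => h.
  exists (-1), (Ordinal hb); split.
    move: ab; rewrite -h /= inordK //; first exact: ltnW.
    exact: ltnW (ltn_ord i).
  by rewrite /= inord_val mulr0n sub0r mulr1n scaleN1r.
by exists 0, i; rewrite mulr0n subrr scale0r.
Qed.

Lemma delta_Hy2 (a b : 'I_(r.+1)) (ab : (a < b)%N) k :
  exists c, act (delta_mx a b) k w = c *: w.
Proof. by case: Hrel => h _ _ _; exists 0; rewrite h // scale0r. Qed.

Lemma diag_Hy1 (D : 'M[C]_(r.+1)) : is_diag_mx D -> D ord_max ord_max = 0 ->
  forall i : 'I_r, exists c (j : 'I_r), (i <= j)%N /\
    D *m xm_r i - xm_r i *m D = c *: xm_r j.
Proof.
move=> /diag_mxP [d ->] hmax i; exists (- d 0 (inord i)), i; split=> //.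
rewrite mul_diag_mx mul_mx_diag /xm_r; apply/matrixP => u v; rewrite !mxE.
move: hmax; rewrite mxE eqxx mulr1n => hmax.
case: (eqVneq (ord_max : 'I_(r.+1)) u) => [<-|]; case: (eqVneq (inord i : 'I_(r.+1)) v) => [<-|] /=;
  rewrite ?mulr1n ?mulr0n ?mulr0 ?mul0r ?subrr //.
by rewrite hmax !mulr1 mul1r sub0r.
Qed.

Lemma diag_Hy2 (D : 'M[C]_(r.+1)) : in_cartan D -> forall k, exists c, act D k w = c *: w.
Proof.
case: Hrel => _ h1 h2 _ hD [|k]; first by exists (weight m D); rewrite h2.
by exists 0; rewrite h1 // scale0r.
Qed.

Lemma base_decomp A k l : in_g_rm1 A -> R (idxL l) -> Un R (act A k (G l w)).
Proof.
move=> hA Rl.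
pose D : 'M[C]_(r.+1) := \matrix_(u, v) (if u == v then A u u else 0).
pose M : 'M[C]_(r.+1) := \matrix_(u, v) (if u == v then 0 else A u v).
have eA : A = D + M.
  by apply/matrixP => u v; rewrite !mxE; case: (eqVneq u v) => [->|]; rewrite ?addr0 ?add0r.
have sM : in_sl M.
  by rewrite /in_sl /mxtrace big1 // => u _; rewrite mxE eqxx.
have sD : in_sl D.
  by move: (in_g_sl hA); rewrite /in_sl eA mxtraceD sM addr0.
have dD : is_diag_mx D.
  by apply/is_diag_mxP => u v huv; rewrite mxE; case: (eqVneq u v) => // e; rewrite e eqxx in huv.
have cD : in_cartan D by [].
have mD : D ord_max ord_max = 0.
  by rewrite mxE eqxx; case: hA => _ ->; rewrite ?eqxx.
have sT a b : in_sl (M a b *: delta_mx a b).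
  case: (eqVneq a b) => [->|ab]; first by rewrite mxE eqxx scale0r; exact: in_sl0.
  by apply: in_slZ; apply: in_sl_delta.
rewrite eA actAD // ; apply: gen_add.
  have := base_generic sD (diag_Hy1 dD mD) (diag_Hy2 cD) k (pre := [::]); apply.
  exact: Rl.
rewrite (matrix_sum_delta M) actAsum; last first.
  move=> a; elim: (index_enum _) => [|b s IH]; rewrite ?big_nil ?big_cons.
    exact: in_sl0.
  by apply: in_slD.
apply: Un_sum => a _; rewrite actAsum // ; apply: Un_sum => b _.
case: (eqVneq a b) => [<-|ab].
  by rewrite mxE eqxx scale0r actA0; apply: gen_zero.
case: (boolP ((a == ord_max) || (b == ord_max))) => hm.
  by rewrite mxE (negbTE ab); case: hA => _ ->; rewrite // scale0r actA0; apply: gen_zero.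
rewrite negb_or in hm; case/andP: hm => ha hb.
rewrite actAZ; last exact: in_sl_delta.
apply: gen_scale.
case: (ltngtP a b) => [lab|lba|eab].
- have := base_generic (in_sl_delta ab) (delta_Hy1 lab (lt_of_neq_max hb)) (delta_Hy2 lab) k (pre := [::]).
  by apply.
- apply: gen_act; last exact: Un_list.
  by exists a, b; split=> //; split=> //; apply: lt_of_neq_max.
- by move: ab; rewrite (val_inj eab) eqxx.
Qed.

Lemma closure v : Un R v -> forall A k, in_g_rm1 A -> Un R (act A k v).
Proof.
elim=> {v} [v [ss [Fs [Rs ->]]]| |u v _ IHu _ IHv|a v _ IH|X l v HX _ IH] A k hA.
- rewrite xprod_G; apply: base_decomp => //; apply: Rmono Rs.
  by apply: idx_eq_ge => t /=; rewrite ?cnt_flat ?sm_flat.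
- by rewrite act0; apply: gen_zero.
- by rewrite actD; apply: gen_add; [apply: IHu | apply: IHv].
- by rewrite actZ; apply: gen_scale; apply: IH.
- have hX := in_g_nminus HX.
  rewrite act_comm; [|exact: in_g_sl|exact: in_g_sl].
  apply: gen_add; first by apply: gen_act => //; apply: IH.
  by apply: IH; apply: in_g_comm.
Qed.

End Main.

Lemma W_to_Un r (m : 'I_r -> nat) (V : lmodType C) (act : 'M[C]_(r.+1) -> nat -> V -> V)
    (w : V) (Hcm : current_module act) (Hrel : weyl_rels m act w)
    (R : idx r -> Prop) (Rmono : forall x y, idx_ge y x -> R x -> R y) v :
  gen_span act (@in_g_rm1 r) (gensR act w R) v <-> Un act w R v.
Proof.
split.
- elim=> {v} [v Hv| |u v _ IHu _ IHv|a v _ IH|A k v hA _ IH].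
  + exact: gen_base.
  + exact: gen_zero.
  + exact: gen_add.
  + exact: gen_scale.
  + exact: (closure Hcm Rmono Hrel IH).
- elim=> {v} [v Hv| |u v _ IHu _ IHv|a v _ IH|A k v hA _ IH].
  + exact: gen_base.
  + exact: gen_zero.
  + exact: gen_add.
  + exact: gen_scale.
  + by apply: gen_act => //; apply: in_g_nminus.
Qed.

Theorem proposition3p2 (r : nat) (hr : (2 <= r)%N) (m : 'I_r -> nat)
    (V : lmodType C) (act : 'M[C]_(r.+1) -> nat -> V -> V) (w : V)
    (HW : is_weyl_module m act w) (ii : idx r) :
  (forall v, W_ge act w ii v <-> Un_ge_w act w ii v) /\
  (forall v, W_gt act w ii v <-> Un_gt_w act w ii v).
Proof.
case: HW => Hcm Hrel _ _; split=> v.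
- apply: (W_to_Un Hcm Hrel (R := fun x => idx_ge x ii)).
  by move=> x y h1 h2; apply: idx_ge_trans h1 h2.
- apply: (W_to_Un Hcm Hrel (R := fun x => idx_gt x ii)).
  by move=> x y h1 h2; apply: idx_ge_gt h1 h2.
Qed.
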